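(* Let $0<v_T<\tfrac12$ and $V_u>v_T$, and put $$k_{\rm peak}=\frac{V_u}{v_T}-1,\qquad g_{\rm peak}=\frac{F'(v_T)\,v_T}{V_u}.$$ Then: (a) for every $g>0$ and $k\ge 0$ such that the central cell fires when $v_u$ is raised from $0$ to $V_u$, one has $k<k_{\rm peak}$; (b) for $g=g_{\rm peak}$ and $k\ge0$, the central cell fires when $v_u$ is raised from $0$ to $V_u$ if and only if $k<k_{\rm peak}$. In particular, the supremum over all $g>0$ of $\sup\{k\ge 0:\ \text{the cell fires with parameters }(g,k)\}$ equals $k_{\rm peak}$ and is attained at $g=g_{\rm peak}$.
   Context: Fix $v_T\in(0,\tfrac12)$ and let $F(v)=v(v-v_T)(1-v)$, with local minimum at $v_{\min}$, local maximum at $v_{\max}$, inflection point $v_i=(1+v_T)/3$; $0<v_{\min}<v_T<v_i<v_{\max}<1$. Central-cell model: for $g>0$, real $k\ge0$ and upstream voltage $v_u$, $\frac{dv}{dt}=F(v)+g(v_u-v)-gkv$; equilibria solve $F(v)=g(k+1)v-gv_u$. Firing: given $V_u>0$, the central cell fires when $v_u$ is raised from $0$ to $V_u$ if there exist $v_{u,c}\in(0,V_u)$ and $v^*\in(v_{\min},v_i)$ with $F(v^* )=g(k+1)v^*-gv_{u,c}$ and $F'(v^* )=g(k+1)$ (a saddle-node collision of the rest and threshold equilibria). *)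

(* Defs.v *)
From Stdlib Require Import Reals Lra.
Open Scope R_scope.

Definition F (vT v : R) : R := v * (v - vT) * (1 - v).

Definition Fp (vT v : R) : R := -3 * v ^ 2 + 2 * (1 + vT) * v - vT.



Definition v_i (vT : R) : R := (1 + vT) / 3.

(* Local minimum of F: the smaller root of F'. *)
Definition v_min (vT : R) : R :=
  ((1 + vT) - sqrt ((1 + vT) ^ 2 - 3 * vT)) / 3.

(* Firing criterion: saddle-node collision of rest and threshold equilibria
   at some v_{u,c} in (0, Vu), v* in (v_min, v_i). *)
Definition fires (vT g k Vu : R) : Prop :=
  exists vuc vstar : R,
    0 < vuc < Vu /\ v_min vT < vstar < v_i vT /\
    F vT vstar = g * (k + 1) * vstar - g * vuc /\
    Fp vT vstar = g * (k + 1).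

Definition k_peak (vT Vu : R) : R := Vu / vT - 1.
Definition g_peak (vT Vu : R) : R := Fp vT vT * vT / Vu.

(* Main.v *)
Require Import Defs.
From Stdlib Require Import Reals Lra Psatz.
Open Scope R_scope.

Lemma vmin_pos vT : 0 < vT < 1/2 -> 0 < v_min vT.
Proof.
  intros H. unfold v_min.
  assert (Hd : 0 <= (1 + vT) ^ 2 - 3 * vT) by nra.
  pose proof (sqrt_sqrt _ Hd) as Hs. pose proof (sqrt_pos ((1 + vT) ^ 2 - 3 * vT)).
  set (s := sqrt ((1 + vT) ^ 2 - 3 * vT)) in *.
  assert (s < 1 + vT) by nra. lra.
Qed.

Lemma partA vT Vu g k : 0 < vT < 1/2 -> 0 < g -> 0 <= k -> fires vT g k Vu ->
  k < k_peak vT Vu.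
Proof.
  intros HT Hg Hk [vuc [vs [[H1 H2] [[H3 H4] [H5 H6]]]]].
  pose proof (vmin_pos vT HT).
  unfold F, Fp, v_i, k_peak in *.
  assert (Hconv : vs^2 * (1 + vT - 2*vs) - vT * (-3 * vs ^ 2 + 2 * (1 + vT) * vs - vT)
     = (vs - vT)^2 * (1 - 2*vs)) by ring.
  assert (Hh : g * vuc = vs^2 * (1 + vT - 2*vs)) by nra.
  assert (0 <= (vs - vT)^2 * (1 - 2*vs)) by (apply Rmult_le_pos; [apply pow2_ge_0|lra]).
  assert (vT * (g * (k+1)) < g * Vu) by nra.
  assert (vT * (k+1) < Vu) by nra.
  apply (Rmult_lt_reg_r vT); [lra|].
  replace ((Vu / vT - 1) * vT) with (Vu - vT) by (field; lra). lra.
Qed.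

Lemma partB vT Vu k : 0 < vT < 1/2 -> vT < Vu -> 0 <= k -> k < k_peak vT Vu ->
  fires vT (g_peak vT Vu) k Vu.
Proof.
  intros HT HV Hk Hkp.
  unfold k_peak, g_peak, fires, F, Fp, v_i, v_min in *.
  assert (HFp : -3 * vT ^ 2 + 2 * (1 + vT) * vT - vT = vT * (1 - vT)) by ring.
  rewrite HFp.
  set (gp := vT * (1 - vT) * vT / Vu).
  assert (Hgp : gp * Vu = vT * (1 - vT) * vT) by (unfold gp; field; lra).
  assert (Hgp0 : 0 < gp) by (unfold gp; apply Rdiv_lt_0_compat; [nra|lra]).
  assert (Hk1 : vT * (k+1) < Vu).
  { assert (k + 1 < Vu / vT) by lra.
    apply (Rmult_lt_compat_l vT) in H; [|lra].
    replace (vT * (Vu / vT)) with Vu in H by (field; lra). lra. }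
  set (c := gp * (k + 1)).
  assert (Hc0 : 0 < c) by (unfold c; nra).
  assert (Hc1 : c < vT * (1 - vT)).
  { unfold c. assert (gp * (vT * (k+1)) < gp * Vu) by nra. nra. }
  set (D := (1 + vT) ^ 2 - 3 * (vT + c)).
  set (D0 := (1 + vT) ^ 2 - 3 * vT).
  assert (HD : 0 < D) by (unfold D; nra).
  assert (HD0 : 0 <= D0) by (unfold D0; nra).
  pose proof (sqrt_sqrt _ (Rlt_le _ _ HD)) as Hs.
  pose proof (sqrt_sqrt _ HD0) as Hs0.
  pose proof (sqrt_lt_R0 _ HD) as Hsp.
  pose proof (sqrt_pos D0).
  fold D0. set (s := sqrt D) in *. set (s0 := sqrt D0) in *.
  set (v := (1 + vT - s) / 3).
  assert (Hss0 : s < s0) by (unfold D, D0 in *; nra).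
  assert (Hs1 : 1 - 2 * vT < s) by (unfold D in *; nra).
  assert (HFv : -3 * v ^ 2 + 2 * (1 + vT) * v - vT = c) by (unfold v, D in *; nra).
  assert (Hv0 : 0 < v) by (unfold v; unfold D0 in *; nra).
  assert (HvT : v < vT) by (unfold v; lra).
  exists (v^2 * (1 + vT - 2*v) / gp), v.
  split; [split|split; [split|split]].
  - apply Rdiv_lt_0_compat; [|lra].
    apply Rmult_lt_0_compat; nra.
  - apply (Rmult_lt_reg_r gp); [lra|].
    unfold Rdiv. rewrite Rmult_assoc, Rinv_l by lra. rewrite Rmult_1_r. rewrite (Rmult_comm Vu), Hgp.
    assert (vT^2*(1-vT) - v^2*(1+vT-2*v) = (vT - v) * (vT*(1-vT) + v*(1 - vT - 2*v)) ) by ring.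
    assert (0 < (vT - v) * (vT*(1-vT) + v*(1 - vT - 2*v))).
    { apply Rmult_lt_0_compat; [lra|]. nra. }
    nra.
  - unfold v. lra.
  - unfold v. lra.
  - rewrite <- HFv. field. lra.
  - exact HFv.
Qed.

Theorem mainTheorem3 (vT Vu : R) :
  0 < vT < 1 / 2 -> vT < Vu ->
  (* (a) *)
  (forall g k : R, 0 < g -> 0 <= k -> fires vT g k Vu -> k < k_peak vT Vu) /\
  (* (b) *)
  (forall k : R, 0 <= k -> (fires vT (g_peak vT Vu) k Vu <-> k < k_peak vT Vu)) /\
  (* in particular: sup over g>0 of sup{k>=0 : fires} is k_peak ... *)
  is_lub (fun k => exists g, 0 < g /\ 0 <= k /\ fires vT g k Vu) (k_peak vT Vu) /\
  (* ... and it is attained at g = g_peak *)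
  0 < g_peak vT Vu /\
  is_lub (fun k => 0 <= k /\ fires vT (g_peak vT Vu) k Vu) (k_peak vT Vu).
Proof.
  intros HT HV.
  assert (Hgp : 0 < g_peak vT Vu).
  { unfold g_peak, Fp. apply Rdiv_lt_0_compat; [|lra].
    replace (-3 * vT ^ 2 + 2 * (1 + vT) * vT - vT) with (vT * (1 - vT)) by ring. nra. }
  assert (Hkp : 0 < k_peak vT Vu).
  { unfold k_peak. assert (1 < Vu / vT); [|lra].
    apply (Rmult_lt_reg_r vT); [lra|]. replace (Vu / vT * vT) with Vu by (field; lra). lra. }
  assert (HA := fun g k => partA vT Vu g k HT).
  assert (HB := fun k => partB vT Vu k HT HV).
  split; [exact HA|]. split.
  { intros k Hk. split; [apply HA; auto| apply HB; auto]. }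
  split; [|split; [exact Hgp|]].
  - split.
    + intros x [g [Hg [Hx Hf]]]. left. eapply HA; eauto.
    + intros b Hb. destruct (Rle_lt_dec (k_peak vT Vu) b) as [|Hlt]; [auto|].
      exfalso. set (k' := (Rmax b 0 + k_peak vT Vu)/2).
      assert (0 <= Rmax b 0) by apply Rmax_r. assert (b <= Rmax b 0) by apply Rmax_l.
      assert (Rmax b 0 < k_peak vT Vu) by (apply Rmax_lub_lt; lra).
      assert (k' <= b); [|unfold k' in *; lra].
      apply Hb. exists (g_peak vT Vu). split; [auto|]. split; [unfold k'; lra|].
      apply HB; unfold k'; lra.
  - split.
    + intros x [Hx Hf]. left. exact (HA (g_peak vT Vu) x Hgp Hx Hf).
    + intros b Hb. destruct (Rle_lt_dec (k_peak vT Vu) b) as [|Hlt]; [auto|].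
      exfalso. set (k' := (Rmax b 0 + k_peak vT Vu)/2).
      assert (0 <= Rmax b 0) by apply Rmax_r. assert (b <= Rmax b 0) by apply Rmax_l.
      assert (Rmax b 0 < k_peak vT Vu) by (apply Rmax_lub_lt; lra).
      assert (k' <= b); [|unfold k' in *; lra].
      apply Hb. split; [unfold k'; lra|].
      apply HB; unfold k'; lra.
Qed.
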